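(* Let $f:\mathbb{R}^n\to\mathbb{R}$ be differentiable with $L$-Lipschitz gradient in the Euclidean norm, i.e. $\|\nabla f(y)-\nabla f(x)\|\le L\|y-x\|$ for all $x,y$ (some $L>0$), and satisfy the Polyak--Łojasiewicz condition $f(x)-f^*\le \frac{1}{2\mu}\|\nabla f(x)\|^2$ for all $x\in\mathbb{R}^n$, with some $\mu>0$, where $f^*=f(x^* )$ for a minimizer $x^*$ of $f$. Suppose that an inexact gradient $\tilde\nabla f(x)$ is available satisfying $\|\tilde\nabla f(x)-\nabla f(x)\|\le \alpha\|\nabla f(x)\|$ for all $x$, with a known $\alpha\in[0,0.5)$. Let $\varepsilon>0$, and set $\xi=(1-2\alpha)^2$ and $L_{max}=2L$. Run Algorithm 1 (described in the context) and suppose one of the following holds: (1) the algorithm has performed $N_*$ iterations, where $N_*=\left\lceil \frac{L_{max}}{\mu\xi}\log\left(\frac{\mu(f(x^0)-f^* )}{\varepsilon}\right)\right\rceil$; or (2) for some $N<N_*$ the stopping rule $\|\tilde\nabla f(x^N)\|^2\le 2\varepsilon(1-\alpha)^2$ holds. Then the output point $\hat x$ (namely $\hat x=x^{N_*}$ in case (1), $\hat x=x^N$ in case (2)) satisfies $$f(\hat x)-f^*\le\frac{\varepsilon}{\mu}\quad\text{and}\quad \|\hat x-x^0\|\le \frac{2L_{max}}{\mu\xi}\sqrt{\frac{2}{L_{min}}\bigl(f(x^0)-f^*\bigr)}.$$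
   Context: Algorithm 1 (gradient descent with adaptive tuning of $L$). Input: $x^0\in\mathbb{R}^n$, constants $L_{min}\ge\mu>0$, $L_0\ge L_{min}$, and $\alpha\in[0,0.5)$. Step 1: set $k=0$. Step 2: set $L_{k+1}=\max\{L_k/2,\,L_{min}\}$. Step 3: set $x^{k+1}=x^k-\frac{1}{L_{k+1}}\frac{1-2\alpha}{1-\alpha}\tilde\nabla f(x^k)$. Step 4: if $$f(x^{k+1})\le f(x^k)+\langle\tilde\nabla f(x^k),x^{k+1}-x^k\rangle+\frac{L_{k+1}}{2}\|x^{k+1}-x^k\|^2+\frac{\alpha}{1-\alpha}\|\tilde\nabla f(x^k)\|\,\|x^{k+1}-x^k\|,$$ go to Step 5; otherwise replace $L_{k+1}$ by $2L_{k+1}$ and return to Step 3. Step 5: if the stopping rule is not satisfied, set $k:=k+1$ and go to Step 2. Output: $x^k$. Here $\log$ is the natural logarithm and $\|\cdot\|$ the Euclidean norm.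
   Formalization: The inputs $L_{min}$ and $L_0$ of Algorithm 1 are both at most $L_{max}=2L$. The paper assumes this as well. *)

(* Defs.v *)
From HB Require Import structures.
From mathcomp Require Import all_boot all_order all_algebra.
From mathcomp Require Import all_classical all_reals all_analysis.
Set Implicit Arguments. Unset Strict Implicit. Unset Printing Implicit Defensive.
Import Order.TTheory GRing.Theory Num.Theory.
Import numFieldNormedType.Exports.
Local Open Scope ring_scope.

Definition dotv {R : realType} {n : nat} (u v : 'rV[R]_n) : R :=
  \sum_(i < n) u 0 i * v 0 i.
Definition enorm {R : realType} {n : nat} (v : 'rV[R]_n) : R :=
  Num.sqrt (dotv v v).

Definition alg1_step {R : realType} {n : nat} (gt : 'rV[R]_n -> 'rV[R]_n)
  (alpha Lt : R) (x : 'rV[R]_n) : 'rV[R]_n :=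
  x - ((1 / Lt) * ((1 - 2 * alpha) / (1 - alpha))) *: gt x.

Definition alg1_accept {R : realType} {n : nat} (f : 'rV[R]_n -> R)
  (gt : 'rV[R]_n -> 'rV[R]_n) (alpha Lt : R) (x : 'rV[R]_n) : Prop :=
  let y := alg1_step gt alpha Lt x in
  f y <= f x + dotv (gt x) (y - x) + Lt / 2 * enorm (y - x) ^+ 2
         + alpha / (1 - alpha) * enorm (gt x) * enorm (y - x).

(* (xs, Ls) is the (unique) sequence of iterates x^k and constants L_k
   produced by Algorithm 1 (ignoring the stopping rule): L_{k+1} is
   max(L_k/2, L_min) * 2^j where j is the least number of doublings for which
   the test of Step 4 succeeds, and x^{k+1} is the corresponding step. *)
Definition alg1_run {R : realType} {n : nat} (f : 'rV[R]_n -> R)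
  (gt : 'rV[R]_n -> 'rV[R]_n) (alpha Lmin L0 : R) (x0 : 'rV[R]_n)
  (xs : nat -> 'rV[R]_n) (Ls : nat -> R) : Prop :=
  xs 0%N = x0 /\ Ls 0%N = L0 /\
  forall k : nat, exists j : nat,
    let Lstart := Num.max (Ls k / 2) Lmin in
    [/\ Ls k.+1 = Lstart * 2 ^+ j,
        alg1_accept f gt alpha (Ls k.+1) (xs k),
        (forall i : nat, (i < j)%N -> ~ alg1_accept f gt alpha (Lstart * 2 ^+ i) (xs k)) &
        xs k.+1 = alg1_step gt alpha (Ls k.+1) (xs k)].

(* N_* = ceil( Lmax/(mu xi) * log( mu (f(x^0) - f_star) / eps ) ), as a natural
   number (taken to be 0 when the ceiling is nonpositive). *)
Definition alg1_Nstar {R : realType} (Lmax mu xi gap eps : R) : nat :=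
  let t := Lmax / (mu * xi) * ln (mu * gap / eps) in
  if 0 < t then `|Num.ceil t|%N else 0%N.

(* Main.v *)
Require Import Defs.
From HB Require Import structures.
From mathcomp Require Import all_boot all_order all_algebra.
From mathcomp Require Import all_classical all_reals all_analysis.
From mathcomp Require Import ring lra.
Import Order.TTheory GRing.Theory Num.Theory.
Import numFieldNormedType.Exports.
Local Open Scope ring_scope.


Section Vec.
Context {R : realType} {n : nat}.
Implicit Types u v w : 'rV[R]_n.

Lemma dotvC u v : dotv u v = dotv v u.
Proof. by apply: eq_bigr => i _; rewrite mulrC. Qed.

Lemma dotvDl u w v : dotv (u + w) v = dotv u v + dotv w v.
Proof. by rewrite /dotv -big_split; apply: eq_bigr => i _; rewrite !mxE mulrDl. Qed.

Lemma dotvZl a u v : dotv (a *: u) v = a * dotv u v.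
Proof. by rewrite /dotv mulr_sumr; apply: eq_bigr => i _; rewrite !mxE mulrA. Qed.

Lemma dotvNl u v : dotv (- u) v = - dotv u v.
Proof. by rewrite -scaleN1r dotvZl mulN1r. Qed.

Lemma dotvBl u w v : dotv (u - w) v = dotv u v - dotv w v.
Proof. by rewrite dotvDl dotvNl. Qed.

Lemma dotvDr u w v : dotv v (u + w) = dotv v u + dotv v w.
Proof. by rewrite dotvC dotvDl !(dotvC v). Qed.

Lemma dotvZr a u v : dotv v (a *: u) = a * dotv v u.
Proof. by rewrite dotvC dotvZl dotvC. Qed.

Lemma dotvNr u v : dotv v (- u) = - dotv v u.
Proof. by rewrite dotvC dotvNl dotvC. Qed.

Lemma dotv_ge0 v : 0 <= dotv v v.
Proof. by apply: sumr_ge0 => i _; rewrite -expr2 sqr_ge0. Qed.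

Lemma enorm_ge0 v : 0 <= enorm v.
Proof. exact: sqrtr_ge0. Qed.

Lemma enorm_sq v : enorm v ^+ 2 = dotv v v.
Proof. by rewrite sqr_sqrtr // dotv_ge0. Qed.

Lemma dotv_eq0 u v : dotv u u = 0 -> dotv u v = 0.
Proof.
move=> /eqP; rewrite psumr_eq0; last by move=> i _; rewrite -expr2 sqr_ge0.
move=> /allP H; apply: big1 => i _.
have := H i (mem_index_enum i); rewrite /= mulf_eq0 orbb => /eqP ->.
by rewrite mul0r.
Qed.

Lemma cauchy_schwarz u v : dotv u v <= enorm u * enorm v.
Proof.
set a := enorm u; set b := enorm v.
have ha : 0 <= a := enorm_ge0 u. have hb : 0 <= b := enorm_ge0 v.
have Ha : dotv u u = a ^+ 2 by rewrite enorm_sq.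
have Hb : dotv v v = b ^+ 2 by rewrite enorm_sq.
have [a0|apos] := eqVneq a 0.
  by rewrite dotv_eq0 ?a0 ?mul0r // Ha a0 expr0n.
have [b0|bpos] := eqVneq b 0.
  by rewrite dotvC dotv_eq0 ?b0 ?mulr0 // Hb b0 expr0n.
have H := dotv_ge0 (b *: u - a *: v).
rewrite dotvBl !dotvDr !dotvNr !dotvZl !dotvZr in H.
rewrite (dotvC v u) Ha Hb in H.
have hab : 0 < a * b by rewrite mulr_gt0 // lt_def ?apos ?bpos.
nra.
Qed.

Lemma enormD u v : enorm (u + v) <= enorm u + enorm v.
Proof.
rewrite -[enorm u + enorm v]ger0_norm ?addr_ge0 ?enorm_ge0 //.
rewrite -sqrtr_sqr {1}/enorm ler_sqrt; last by rewrite sqr_ge0.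
rewrite dotvDl !dotvDr (dotvC v u) -[dotv u u]enorm_sq -[dotv v v]enorm_sq.
have := cauchy_schwarz u v; nra.
Qed.

Lemma enormZ a v : enorm (a *: v) = `|a| * enorm v.
Proof.
by rewrite /enorm dotvZl dotvZr mulrA -expr2 sqrtrM ?sqr_ge0 // sqrtr_sqr.
Qed.

Lemma enormN v : enorm (- v) = enorm v.
Proof. by rewrite -scaleN1r enormZ normrN normr1 mul1r. Qed.

Lemma enormB u v : enorm (u - v) = enorm (v - u).
Proof. by rewrite -enormN opprB. Qed.

End Vec.

Lemma enorm0 {R : realType} {n : nat} : enorm (0 : 'rV[R]_n) = 0.
Proof. by rewrite -(scale0r (0 : 'rV[R]_n)) enormZ normr0 mul0r. Qed.

Section DescentSec.
Local Open Scope classical_set_scope.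
Local Open Scope ring_scope.


Lemma descent {R : realType} {n : nat} (f : 'rV[R]_n -> R) (grad : 'rV[R]_n -> 'rV[R]_n) (L : R) :
  (forall x, differentiable f x /\ forall h, 'd f x h = dotv (grad x) h) ->
  (forall x y, enorm (grad y - grad x) <= L * enorm (y - x)) ->
  forall x d, f (d + x) <= f x + dotv (grad x) d + L / 2 * enorm d ^+ 2.
Proof.
move=> Hd HL x d.
pose phi := fun t : R => f (t *: d + x).
have Dphi : forall t : R, is_derive t (1:R) phi (dotv (grad (t *: d + x)) d).
  move=> t; set p := t *: d + x.
  have E : (fun h : R => h^-1 *: ((phi \o shift t) (h *: 1) - phi t)) =
           (fun h : R => h^-1 *: ((f \o shift p) (h *: d) - f p)).
    by apply: funext => h /=; rewrite /phi /p /= [h%:A]mulr1 scalerDl addrA.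
  apply: DeriveDef.
    rewrite /derivable E; exact: diff_derivable (Hd p).1.
  rewrite /derive E -/(derive f p d) deriveE ?(Hd p).2 //; exact: (Hd p).1.
set c0 := dotv (grad x) d; set K := L / 2 * enorm d ^+ 2.
pose psi := phi - (c0 \*: (@id R) + K \*: ((@id R) * (@id R))).
have Dpsi : forall t : R, is_derive t (1:R) psi
   (dotv (grad (t *: d + x)) d - (c0 *: 1 + K *: (t *: 1 + t *: 1))).
  by move=> t; apply: is_deriveB.
have cont : {within `[0, 1], continuous psi}.
  apply: derivable_within_continuous => t _; exact: (Dpsi t).(ex_derive).
have [c c01 Hc] := MVT ltr01 (fun t _ => Dpsi t) cont.
move: c01; rewrite in_itv /= => /andP [c0p c1].
have Hpsi : psi 1 <= psi 0.
  rewrite -subr_le0 Hc subr0 mulr1.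
  have CS := cauchy_schwarz (grad (c *: d + x) - grad x) d.
  have Lc := HL x (c *: d + x).
  rewrite addrK enormZ (ger0_norm (ltW c0p)) in Lc.
  rewrite dotvBl in CS.
  have E1 : forall a b : R, a *: b = a * b by [].
  rewrite !E1 /K -/c0; rewrite -/c0 in CS.
  have := ler_wpM2r (enorm_ge0 d) Lc.
  rewrite !mulr1 expr2; lra.
move: Hpsi; rewrite /psi /phi /=.
change (f (1 *: d + x) - (c0 * 1 + K * (1 * 1)) <= f (0 *: d + x) - (c0 * 0 + K * (0 * 0)) -> f (d + x) <= f x + c0 + K).
rewrite scale1r scale0r add0r !mulr1 !mulr0 !addr0 subr0; lra.
Qed.

End DescentSec.


Lemma grad_lb {R : realType} {n : nat} (grad gt : 'rV[R]_n -> 'rV[R]_n) alpha :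
  (forall x, enorm (gt x - grad x) <= alpha * enorm (grad x)) ->
  forall x, (1 - alpha) * enorm (grad x) <= enorm (gt x).
Proof.
move=> H x.
have := enormD (gt x) (grad x - gt x); rewrite addrC subrK.
rewrite enormB; have := H x; lra.
Qed.

Lemma accept_ok {R : realType} {n : nat} (f : 'rV[R]_n -> R) (grad gt : 'rV[R]_n -> 'rV[R]_n)
  (L alpha Lt : R) :
  (forall x, differentiable f x /\ forall h, 'd f x h = dotv (grad x) h) ->
  (forall x y, enorm (grad y - grad x) <= L * enorm (y - x)) ->
  0 <= alpha -> alpha < 1 / 2 ->
  (forall x, enorm (gt x - grad x) <= alpha * enorm (grad x)) ->
  L <= Lt -> forall x, alg1_accept f gt alpha Lt x.
Proof.
move=> Hd HL a0 a1 Hg LLt x; rewrite /alg1_accept.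
set y := alg1_step gt alpha Lt x; set d := y - x.
have Hy : y = d + x by rewrite /d subrK.
have De := descent f grad L Hd HL x d; rewrite -Hy in De.
have E : dotv (grad x) d = dotv (gt x) d + dotv (grad x - gt x) d.
  by rewrite dotvBl; ring.
have CS := cauchy_schwarz (grad x - gt x) d.
rewrite enormB in CS.
have lb := grad_lb grad gt alpha Hg x.
have gx := Hg x.
set b := alpha / (1 - alpha).
have hb : b * (1 - alpha) = alpha by rewrite /b mulfVK // subr_eq0; apply/eqP => h; rewrite -h in a1; lra.
have b0 : 0 <= b by rewrite /b divr_ge0 //; lra.
have nd := enorm_ge0 d. have ng := enorm_ge0 (grad x).
have h1 := ler_wpM2l b0 lb.
have h2 := ler_wpM2r nd gx.
have h3 := ler_wpM2r nd h1.
have h4 : L / 2 * enorm d ^+ 2 <= Lt / 2 * enorm d ^+ 2.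
  by apply: ler_wpM2r; [rewrite sqr_ge0 | lra].
rewrite E in De. rewrite mulrA hb in h3.
nra.
Qed.


Lemma ringid {R : realType} (F h a Lt : R) :
  F - h * a ^+ 2 + Lt / 2 * (h * a) ^+ 2 + (1 - Lt * h) * a * (h * a) = F - Lt / 2 * (h * a) ^+ 2.
Proof. by field. Qed.

Theorem theorem1 (R : realType) (n : nat)
  (f : 'rV[R]_n -> R) (grad : 'rV[R]_n -> 'rV[R]_n) (gt : 'rV[R]_n -> 'rV[R]_n)
  (L mu alpha eps Lmin L0 : R) (xstar x0 : 'rV[R]_n)
  (xs : nat -> 'rV[R]_n) (Ls : nat -> R) (N : nat) :
  (forall x, differentiable f x /\ forall h, 'd f x h = dotv (grad x) h) ->
  0 < L ->
  (forall x y, enorm (grad y - grad x) <= L * enorm (y - x)) ->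
  (forall x, f xstar <= f x) ->
  0 < mu ->
  (forall x, f x - f xstar <= 1 / (2 * mu) * enorm (grad x) ^+ 2) ->
  0 <= alpha -> alpha < 1 / 2 ->
  (forall x, enorm (gt x - grad x) <= alpha * enorm (grad x)) ->
  0 < eps ->
  mu <= Lmin -> Lmin <= L0 ->
  Lmin <= 2 * L -> L0 <= 2 * L ->
  alg1_run f gt alpha Lmin L0 x0 xs Ls ->
  let xi := (1 - 2 * alpha) ^+ 2 in
  let Lmax := 2 * L in
  let Nstar := alg1_Nstar Lmax mu xi (f x0 - f xstar) eps in
  (N = Nstar \/
   ((N < Nstar)%N /\ enorm (gt (xs N)) ^+ 2 <= 2 * eps * (1 - alpha) ^+ 2)) ->
  f (xs N) - f xstar <= eps / mu /\
  enorm (xs N - x0) <= 2 * Lmax / (mu * xi) * Num.sqrt (2 / Lmin * (f x0 - f xstar)).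
Proof.
move=> Hd L0p HL Hmin mup PL a0 a1 Hg epsp muLmin LminL0 Lmin2L L02L [Hx0 [HL0 Hrun]] xi Lmax Nstar HN.
have Lminp : 0 < Lmin := lt_le_trans mup muLmin.
pose D k := f (xs k) - f xstar.
have D0 k : 0 <= D k by rewrite /D subr_ge0.
have HLs : forall k, Lmin <= Ls k <= 2 * L.
  elim=> [|k /andP [IH1 IH2]]; first by rewrite HL0; apply/andP.
  have [j [E Acc Hm Hxk]] := Hrun k.
  set Ls0 := Num.max (Ls k / 2) Lmin in E Hm.
  have Ls0a : Lmin <= Ls0 by rewrite /Ls0 le_max lexx orbT.
  have Ls0b : Ls0 <= 2 * L by rewrite /Ls0 ge_max Lmin2L andbT; lra.
  have Ls0p : 0 < Ls0 := lt_le_trans Lminp Ls0a.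
  rewrite E; apply/andP; split.
    apply: le_trans Ls0a _; apply: ler_peMr; [exact: ltW | apply: exprn_ege1; lra].
  case: j E Hm => [|i] E Hm; first by rewrite expr0 mulr1.
  have Hi : Ls0 * 2 ^+ i < L.
    rewrite ltNge; apply/negP => Hle; apply: (Hm i (ltnSn i)).
    exact: (accept_ok f grad gt L alpha _ Hd HL a0 a1 Hg Hle).
  rewrite exprS mulrCA; lra.
have a1' : alpha < 1 by lra.
have a1n : 1 - alpha != 0 by apply/eqP => h; lra.
set c := (1 - 2 * alpha) / (1 - alpha).
have c0 : 0 <= c by rewrite /c divr_ge0 //; lra.
have Eb : alpha / (1 - alpha) = 1 - c by rewrite /c; field.
have Hstep : forall k, Ls k.+1 * enorm (xs k.+1 - xs k) = c * enorm (gt (xs k)) /\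
    f (xs k.+1) <= f (xs k) - Ls k.+1 / 2 * enorm (xs k.+1 - xs k) ^+ 2.
  move=> k; have [j [_ Acc _ Hxk]] := Hrun k.
  have /andP [Lk1 _] := HLs k.+1.
  have Ltp : 0 < Ls k.+1 := lt_le_trans Lminp Lk1.
  set Lt := Ls k.+1 in Acc Hxk Ltp *.
  set g := gt (xs k) in Acc Hxk *.
  set h := 1 / Lt * c.
  have Hdx : xs k.+1 - xs k = - (h *: g) by rewrite Hxk /alg1_step addrAC subrr add0r.
  have h0 : 0 <= h by rewrite /h mulr_ge0 // divr_ge0 // ltW.
  have Lth : Lt * h = c by rewrite /h; field; apply/eqP => hh; lra.
  have Es : enorm (xs k.+1 - xs k) = h * enorm g by rewrite Hdx enormN enormZ ger0_norm.
  move: Acc; rewrite /alg1_accept /= -Hxk Hdx dotvNr dotvZr -enorm_sq -Hdx Es Eb -Lth.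
  move=> Acc; split; first by rewrite mulrA.
  apply: (le_trans Acc); rewrite le_eqVlt; apply/orP; left; apply/eqP; rewrite -/g; exact: ringid.
have a2 : 0 < 1 - 2 * alpha by lra.
have xip : 0 < xi by rewrite /xi exprn_gt0.
have xi1 : xi <= 1 by rewrite /xi expr2; nra.
have Lmaxp : 0 < Lmax by rewrite /Lmax; lra.
set a := mu * xi / Lmax.
have aLmax : a * Lmax = mu * xi by rewrite /a mulfVK //; apply/eqP => hh; lra.
have ap : 0 < a by rewrite /a divr_gt0 // mulr_gt0.
have a1'' : a <= 1.
  rewrite /a ler_pdivrMr // mul1r /Lmax.
  have : mu * xi <= mu * 1 by rewrite ler_pM2l.
  lra.
set q := 1 - a.
have cg : forall x, (1 - 2 * alpha) * enorm (grad x) <= c * enorm (gt x).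
  move=> x; have := grad_lb grad gt alpha Hg x.
  have -> : 1 - 2 * alpha = c * (1 - alpha) by rewrite /c; field.
  rewrite -mulrA; exact: ler_wpM2l.
have Hdec : forall k, D k.+1 <= q * D k /\ enorm (xs k.+1 - xs k) ^+ 2 <= 2 * D k / Lmin.
  move=> k; have [E1 E2] := Hstep k.
  have /andP [Lk1 Lk2] := HLs k.+1.
  have Ltp : 0 < Ls k.+1 := lt_le_trans Lminp Lk1.
  set Lt := Ls k.+1 in E1 E2 Ltp Lk1 Lk2.
  set s := enorm (xs k.+1 - xs k) in E1 E2 *.
  have ng := enorm_ge0 (grad (xs k)).
  have cgk := cg (xs k).
  have sq : xi * enorm (grad (xs k)) ^+ 2 <= (Lt * s) ^+ 2.
    rewrite E1 /xi -exprMn; apply: lerXn2r => //; rewrite nnegrE mulr_ge0 // ?enorm_ge0 // ltW //.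
  have pl := PL (xs k); rewrite -/(D k) in pl.
  have pl' : 2 * mu * D k <= enorm (grad (xs k)) ^+ 2.
    have m2 : 0 < 2 * mu by rewrite mulr_gt0.
    have := ler_wpM2l (ltW m2) pl.
    by rewrite mul1r mulrA divff ?mul1r // gt_eqF.
  have Dk1 := D0 k.+1. have Dk := D0 k.
  have E2' : D k.+1 <= D k - Lt / 2 * s ^+ 2 by rewrite /D; lra.
  have s0 : 0 <= s ^+ 2 by rewrite sqr_ge0.
  split.
    have h1 : xi * (2 * mu * D k) <= Lt * (Lt * s ^+ 2).
      have -> : Lt * (Lt * s ^+ 2) = (Lt * s) ^+ 2 by ring.
      by apply: (le_trans _ sq); rewrite ler_pM2l.
    have h2 : Lt * (Lt * s ^+ 2) <= Lmax * (Lt * s ^+ 2).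
      by apply: ler_wpM2r; [rewrite mulr_ge0 // ltW | rewrite /Lmax].
    have h3 : Lmax * (a * D k) <= Lmax * (Lt / 2 * s ^+ 2).
      rewrite mulrA (mulrC Lmax) aLmax; nra.
    rewrite ler_pM2l // in h3.
    rewrite /q; lra.
  rewrite ler_pdivlMr //.
  have : Lmin * s ^+ 2 <= Lt * s ^+ 2 by apply: ler_wpM2r.
  lra.
have q0 : 0 <= q by rewrite /q; lra.
have q1 : q < 1 by rewrite /q; lra.
have HDk : forall k, D k <= q ^+ k * D 0%N.
  elim=> [|k IH]; first by rewrite expr0 mul1r.
  have [h _] := Hdec k.
  apply: (le_trans h); rewrite exprS -mulrA; exact: ler_wpM2l.
have HD0 : D 0%N = f x0 - f xstar by rewrite /D Hx0.
split.
  case: HN => [HN | [_ Hst]]; last first.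
    have lb := grad_lb grad gt alpha Hg (xs N).
    have ng := enorm_ge0 (grad (xs N)).
    have la : 0 < 1 - alpha by lra.
    have h1 : ((1 - alpha) * enorm (grad (xs N))) ^+ 2 <= enorm (gt (xs N)) ^+ 2.
      apply: lerXn2r => //; rewrite nnegrE ?enorm_ge0 // mulr_ge0 // ltW //.
    have h2 : enorm (grad (xs N)) ^+ 2 <= 2 * eps.
      rewrite exprMn in h1.
      have := le_trans h1 Hst; rewrite [2 * eps * _]mulrC ler_pM2l //.
      by rewrite exprn_gt0.
    have := PL (xs N).
    have -> : eps / mu = 1 / (2 * mu) * (2 * eps) by field; apply/eqP => hh; lra.
    move=> h3; apply: (le_trans h3); rewrite ler_pM2l //.
    by rewrite divr_gt0 // mulr_gt0.
  have [Dz | Dp] := eqVneq (D 0%N) 0.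
    apply: (le_trans (HDk N)); rewrite Dz mulr0; exact: ltW (divr_gt0 epsp mup).
  have Dpos : 0 < D 0%N by rewrite lt_def Dp D0.
  set Y := mu * (f x0 - f xstar) / eps.
  have Yp : 0 < Y by rewrite /Y -HD0 divr_gt0 // mulr_gt0.
  have EY : expR (ln Y) = Y by apply: lnK; rewrite posrE.
  have Ea : a * (Lmax / (mu * xi) * ln Y) = ln Y.
    rewrite mulrA /a; field; apply/and3P; split; apply/eqP => hh; lra.
  have Fin : q ^+ N * D 0%N <= eps / mu -> f (xs N) - f xstar <= eps / mu.
    by move=> h; apply: le_trans h; exact: HDk.
  apply: Fin.
  move: HN; rewrite /Nstar /alg1_Nstar -/Y.
  case: ifP => tpos HN.
    set t := Lmax / (mu * xi) * ln Y in tpos HN Ea.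
    have Nt : t <= N%:R.
      rewrite HN natr_absz ger0_norm; first exact: ceil_ge.
      rewrite ceil_ge0; lra.
    have hq : q ^+ N <= expR (- a) ^+ N.
      apply: lerXn2r => //; rewrite ?nnegrE ?expR_ge0 //.
      have := expR_ge1Dx (- a); rewrite /q; lra.
    have hq2 : expR (- a) ^+ N <= Y^-1.
      rewrite -expRM_natl -EY -expRN ler_expR -Ea.
      have : a * t <= a * N%:R by rewrite ler_pM2l.
      lra.
    have := le_trans hq hq2 => hq3.
    apply: le_trans (ler_wpM2r (D0 0%N) hq3) _.
    rewrite /Y -HD0 invf_div le_eqVlt; apply/orP; left; apply/eqP.
    by field; apply/andP; split; apply/eqP => hh; lra.
  rewrite HN expr0 mul1r.
  have tle : Lmax / (mu * xi) * ln Y <= 0 by rewrite leNgt tpos.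
  have lY : ln Y <= 0.
    rewrite -Ea; rewrite -(ler_pM2l ap) mulr0 in tle; exact: tle.
  have : Y <= 1 by rewrite -EY -expR0 ler_expR.
  rewrite /Y -HD0 ler_pdivrMr // mul1r => h.
  by rewrite ler_pdivlMr // mulrC.
rewrite -HD0.
set C := Num.sqrt (2 / Lmin * D 0%N).
set r := Num.sqrt q.
have r0 : 0 <= r := sqrtr_ge0 q.
have rq : r ^+ 2 = q by rewrite sqr_sqrtr.
have r1 : r < 1.
  by rewrite /r -sqrtr1 ltr_sqrt // ltr01.
have C0 : 0 <= C := sqrtr_ge0 _.
have Hsk : forall k, enorm (xs k.+1 - xs k) <= r ^+ k * C.
  move=> k; have [_ h] := Hdec k.
  set s := enorm (xs k.+1 - xs k) in h *.
  have -> : s = Num.sqrt (s ^+ 2) by rewrite sqrtr_sqr ger0_norm // enorm_ge0.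
  have -> : r ^+ k * C = Num.sqrt ((r ^+ k) ^+ 2 * (2 / Lmin * D 0%N)).
    by rewrite sqrtrM ?sqr_ge0 // sqrtr_sqr ger0_norm // exprn_ge0.
  rewrite ler_sqrt; last by rewrite mulr_ge0 ?sqr_ge0 // mulr_ge0 // divr_ge0 // ltW.
  apply: (le_trans h).
  rewrite -exprM mulnC exprM rq.
  have := ler_wpM2l (ltW (divr_gt0 (ltr0Sn _ 1) Lminp)) (HDk k).
  have -> : 2 * D k / Lmin = 2 / Lmin * D k by rewrite mulrAC.
  by rewrite mulrCA.
have Hdist : forall N, (1 - r) * enorm (xs N - x0) <= C * (1 - r ^+ N).
  elim=> [|k IH]; first by rewrite Hx0 subrr enorm0 mulr0 expr0 subrr mulr0.
  have -> : xs k.+1 - x0 = (xs k.+1 - xs k) + (xs k - x0) by rewrite addrA subrK.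
  have h := enormD (xs k.+1 - xs k) (xs k - x0).
  have h' := ler_wpM2l (_ : 0 <= 1 - r) h.
  have := Hsk k.
  have : 0 <= 1 - r by lra.
  move=> r1' hs; have := h' r1'.
  have := ler_wpM2l r1' hs.
  rewrite exprS. nra.
have rN : 0 <= r ^+ N := exprn_ge0 _ r0.
have rN1 : r ^+ N <= 1 by apply: exprn_ile1 => //; exact: ltW.
have e0 := enorm_ge0 (xs N - x0).
have key : a * enorm (xs N - x0) <= 2 * C.
  have -> : a = (1 - r) * (1 + r).
    have -> : (1 - r) * (1 + r) = 1 - r ^+ 2 by ring.
    by rewrite rq /q opprB addrC subrK.
  have hr : 0 <= 1 + r by lra.
  have h1 := ler_wpM2l hr (Hdist N).
  set X := C * (1 - r ^+ N) in h1.
  have X0 : 0 <= X by rewrite /X mulr_ge0 //; lra.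
  have X1 : X <= C by rewrite /X ler_piMr //; lra.
  have h2 : (1 + r) * X <= 2 * X by apply: ler_wpM2r => //; lra.
  rewrite -mulrA (mulrC (1 - r)) -/X; lra.
have -> : 2 * Lmax / (mu * xi) = 2 / a.
  rewrite /a; field; apply/and3P; split; apply/eqP => hh; lra.
have -> : 2 / a * C = (2 * C) / a by rewrite mulrAC.
by rewrite ler_pdivlMr // mulrC.
Qed.
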